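(* Let $W_1,\dots,W_{15}$ be $15$ mutually unbiased weighing matrices of order $16$ and weight $9$. Let $Y\subset\mathbb{R}^{16}$ be the set of row vectors of $I_{16},\frac13W_1,\dots,\frac13W_{15}$ (so $|Y|=256$). Then the graph with vertex set $Y$ in which two distinct vectors are adjacent if and only if they are orthogonal is a strongly regular graph with parameters $(256,120,56,56)$.
   Context: A weighing matrix of order $n$ and weight $k$ is an $n\times n$ matrix $W$ with entries in $\{1,-1,0\}$ such that $WW^T=kI_n$. Two weighing matrices $W_1,W_2$ of order $n$ and weight $k$ are unbiased if $\frac{1}{\sqrt{k}}W_1W_2^T$ is also a weighing matrix of order $n$ and weight $k$; a set is mutually unbiased if any two distinct members are unbiased. A strongly regular graph with parameters $(v,k,\lambda,\mu)$ is a $k$-regular graph on $v$ vertices in which any two adjacent vertices have exactly $\lambda$ common neighbours and any two distinct non-adjacent vertices have exactly $\mu$ common neighbours. *)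

(* Defs.v *)
From HB Require Import structures.
From mathcomp Require Import all_boot all_order all_algebra.
Set Implicit Arguments. Unset Strict Implicit. Unset Printing Implicit Defensive.
Import Order.TTheory GRing.Theory Num.Theory.
Local Open Scope ring_scope.

Definition is_weighing (R : numDomainType) (n k : nat) (W : 'M[R]_n) : Prop :=
  (forall i j, W i j \in [:: 1; -1; 0]) /\ W *m W^T = (k%:R)%:M.

Definition unbiased (R : rcfType) (n k : nat) (W1 W2 : 'M[R]_n) : Prop :=
  is_weighing k ((Num.sqrt (k%:R : R))^-1 *: (W1 *m W2^T)).

Definition mutually_unbiased_weighing (R : rcfType) (m n k : nat)
    (W : 'I_m -> 'M[R]_n) : Prop :=
  (forall i, is_weighing k (W i)) /\
  (forall i j, i != j -> unbiased k (W i) (W j)).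

Definition dotv (R : pzRingType) (n : nat) (u v : 'rV[R]_n) : R := (u *m v^T) 0 0.

Definition srg (T : finType) (e : rel T) (v k lam mu : nat) : Prop :=
  [/\ (forall x, ~~ e x x), (forall x y, e x y = e y x),
      #|T| = v,
      (forall x, #|[set y | e x y]| = k) &
      (forall x y, x != y ->
         #|[set z | e x z && e y z]| = (if e x y then lam else mu))].

(* Index set of the 256 vectors: rows of I_16, then rows of (1/3) W_i. *)
Definition Yidx := ('I_16 + ('I_15 * 'I_16))%type.

Definition Yvec (R : fieldType) (W : 'I_15 -> 'M[R]_16) (x : Yidx) : 'rV[R]_16 :=
  match x with
  | inl r => row r (1%:M : 'M[R]_16)
  | inr (i, r) => row r ((3%:R)^-1 *: W i)
  end.

Definition Yorth (R : fieldType) (W : 'I_15 -> 'M[R]_16) : rel Yidx :=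
  fun x y => (Yvec W x != Yvec W y) && (dotv (Yvec W x) (Yvec W y) == 0).

Arguments mutually_unbiased_weighing {R} m n k W.
Arguments is_weighing {R} n k W.
Arguments unbiased {R} n k W1 W2.

(* Main.v *)
Require Import Defs.
From HB Require Import structures.
From mathcomp Require Import all_boot all_order all_algebra.
From mathcomp Require Import ring lra zify.
Set Implicit Arguments. Unset Strict Implicit. Unset Printing Implicit Defensive.
Import Order.TTheory GRing.Theory Num.Theory.
Local Open Scope ring_scope.

Definition dt (R : pzRingType) (J : finType) (u w : J -> R) : R := \sum_j u j * w j.
Definition Zt (R : pzRingType) n (u : 'I_n -> R) (p : 'I_n * 'I_n) : R := u p.1 * u p.2.
Definition Dt (R : pzRingType) n (p q : 'I_n * 'I_n) : R :=
  (p.1 == p.2)%:R * (q.1 == q.2)%:R + (p == q)%:R + (q == (p.2, p.1))%:R.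
Arguments Dt {R n} p q.

Lemma sum_delta (R : pzRingType) (T : finType) (a : T) (F : T -> R) :
  \sum_b (a == b)%:R * F b = F a.
Proof.
rewrite (bigD1 a) //= eqxx mul1r big1 ?addr0 // => b /negbTE.
by rewrite eq_sym => ->; rewrite mul0r.
Qed.

Lemma sum_delta' (R : pzRingType) (T : finType) (a : T) (F : T -> R) :
  \sum_b (b == a)%:R * F b = F a.
Proof. by rewrite -(sum_delta a); apply: eq_bigr => b _; rewrite eq_sym. Qed.

Lemma sum_delta1 (R : pzRingType) (T : finType) (a : T) :
  \sum_b (a == b)%:R = 1 :> R.
Proof. by rewrite -[RHS](sum_delta a (fun _ => 1)); apply: eq_bigr => b _; rewrite mulr1. Qed.

Lemma sum_pair (R : pzRingType) (I J : finType) (F : I * J -> R) :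
  \sum_p F p = \sum_a \sum_b F (a, b).
Proof. by rewrite pair_big; apply: eq_bigr => -[]. Qed.

Lemma dtZ (R : comPzRingType) n (u w : 'I_n -> R) :
  dt (Zt u) (Zt w) = (dt u w) ^+ 2.
Proof.
rewrite /dt sum_pair expr2 big_distrlr /=.
by apply: eq_bigr => a _; apply: eq_bigr => b _; rewrite /Zt /=; ring.
Qed.

Lemma sumS2 (R : comPzRingType) (I J : finType) (u : I -> J -> R) :
  \sum_p \sum_q (\sum_z u z p * u z q) ^+ 2 = \sum_z \sum_w (dt (u z) (u w)) ^+ 2.
Proof.
transitivity (\sum_p \sum_q \sum_z \sum_w (u z p * u w p) * (u z q * u w q)).
  apply: eq_bigr => p _; apply: eq_bigr => q _; rewrite expr2 big_distrlr /=.
  by apply: eq_bigr => z _; apply: eq_bigr => w _; ring.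
rewrite exchange_big /=.
under eq_bigr => q _ do rewrite exchange_big /=.
rewrite exchange_big /=; apply: eq_bigr => z _.
under eq_bigr => q _ do rewrite exchange_big /=.
rewrite exchange_big /=; apply: eq_bigr => w _.
by rewrite /dt expr2 big_distrlr /= exchange_big.
Qed.
Lemma contractD (R : comPzRingType) n (F : 'I_n * 'I_n -> R) (p : 'I_n * 'I_n) :
  \sum_q Dt p q * F q = (p.1 == p.2)%:R * \sum_a F (a, a) + F p + F (p.2, p.1).
Proof.
rewrite /Dt.
under eq_bigr => q _ do rewrite !mulrDl.
rewrite !big_split /= sum_delta sum_delta'; congr (_ + _ + _).
rewrite mulr_sumr sum_pair; apply: eq_bigr => a _.
rewrite -(sum_delta a (fun b => (p.1 == p.2)%:R * F (a, b))) /=.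
by apply: eq_bigr => b _; rewrite /=; ring.
Qed.

Lemma contractL (R : comPzRingType) n (x y : 'I_n -> R) :
  \sum_p \sum_q Dt p q * (Zt x p * Zt y q) = dt x x * dt y y + 2%:R * (dt x y) ^+ 2.
Proof.
transitivity (\sum_p Zt x p * \sum_q Dt p q * Zt y q).
  apply: eq_bigr => p _; rewrite mulr_sumr; apply: eq_bigr => q _; ring.
under eq_bigr => p _ do rewrite contractD !mulrDr.
rewrite !big_split /= -dtZ.
have -> : \sum_i Zt x i * Zt y (i.2, i.1) = dt (Zt x) (Zt y).
  by apply: eq_bigr => -[a b] _; rewrite /Zt /=; ring.
have -> : \sum_i Zt x i * ((i.1 == i.2)%:R * \sum_a Zt y (a, a)) = dt x x * dt y y.
  rewrite sum_pair /dt mulr_suml; apply: eq_bigr => a _.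
  rewrite -(sum_delta a (fun b => Zt x (a, b) * \sum_a0 Zt y (a0, a0))).
  rewrite /Zt /=; apply: eq_bigr => b _; ring.
by rewrite /dt; ring.
Qed.

Lemma sumDD (R : comPzRingType) n :
  \sum_(p : 'I_n * 'I_n) \sum_q (Dt p q : R) ^+ 2 = (3 * n ^ 2 + 6 * n)%:R.
Proof.
have H : forall p : 'I_n * 'I_n, \sum_q (Dt p q : R) ^+ 2 =
   (n + 6)%:R * (p.1 == p.2)%:R + 2%:R.
  move=> [a b]; under eq_bigr => q _ do rewrite expr2.
  rewrite contractD /= /Dt /=.
  case: (eqVneq a b) => [<-|ne].
    rewrite !eqxx /=.
    have -> : \sum_(i < n) (1 * (i == i)%:R + ((a, a) == (i, i))%:R + ((i, i) == (a, a))%:R : R)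
       = n%:R + 2%:R.
      rewrite !big_split /=.
      under eq_bigr => c _ do rewrite eqxx mul1r.
      under [X in _ + X + _ = _]eq_bigr => c _ do rewrite xpair_eqE andbb.
      under [X in _ + _ + X = _]eq_bigr => c _ do rewrite xpair_eqE andbb eq_sym.
      rewrite !sum_delta1 sumr_const card_ord (_ : true%:R = 1 :> R) // -mulr_natl mulr1; ring.
    rewrite natrD; ring.
  rewrite !xpair_eqE (negbTE ne) eq_sym (negbTE ne) !eqxx /= natrD; ring.
under eq_bigr => p _ do rewrite H.
rewrite big_split /= -mulr_sumr sumr_const card_prod card_ord sum_pair.
under eq_bigr => a _ do rewrite sum_delta1.
rewrite sumr_const card_ord.
rewrite -mulr_natr !natrD !natrM ?natrX; ring.
Qed.

Lemma design (R : realDomainType) (I : finType) n (v : I -> 'I_n -> R) (c : R) :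
  \sum_z \sum_w (dt (v z) (v w)) ^+ 4 - c * 6%:R * \sum_z (dt (v z) (v z)) ^+ 2
    + c ^+ 2 * (3 * n ^ 2 + 6 * n)%:R = 0 ->
  forall x y : 'I_n -> R,
  \sum_z (dt (v z) x) ^+ 2 * (dt (v z) y) ^+ 2 =
    c * (dt x x * dt y y + 2%:R * (dt x y) ^+ 2).
Proof.
move=> H x y.
pose S p q := \sum_z Zt (v z) p * Zt (v z) q.
have S2 : \sum_p \sum_q S p q ^+ 2 = \sum_z \sum_w (dt (v z) (v w)) ^+ 4.
  rewrite (sumS2 (fun z => Zt (v z))).
  by apply: eq_bigr => z _; apply: eq_bigr => w _; rewrite dtZ -exprM.
have SD : \sum_p \sum_q S p q * Dt p q = 3%:R * \sum_z (dt (v z) (v z)) ^+ 2.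
  transitivity (\sum_z \sum_p \sum_q Dt p q * (Zt (v z) p * Zt (v z) q)).
    rewrite [RHS]exchange_big /=; apply: eq_bigr => p _.
    rewrite [RHS]exchange_big /=; apply: eq_bigr => q _.
    by rewrite /S mulr_suml; apply: eq_bigr => z _; rewrite mulrC.
  rewrite mulr_sumr; apply: eq_bigr => z _; rewrite contractL; ring.
have HT : \sum_p \sum_q (S p q - c * Dt p q) ^+ 2 = 0.
  have H' : \sum_p \sum_q S p q ^+ 2 - c * 2%:R * \sum_p \sum_q S p q * Dt p q
     + c ^+ 2 * \sum_(p : 'I_n * 'I_n) \sum_q (Dt p q : R) ^+ 2 = 0.
    have DD : \sum_(p : 'I_n * 'I_n) \sum_q (Dt p q : R) ^+ 2 = (3 * n ^ 2 + 6 * n)%:R by exact: sumDD.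
    by rewrite S2 SD DD -[RHS]H; ring.
  rewrite -[RHS]H' !mulr_sumr -sumrB -big_split /=; apply: eq_bigr => p _.
  rewrite !mulr_sumr -sumrB -big_split /=; apply: eq_bigr => q _; ring.
have T0 : forall p q, S p q = c * Dt p q.
  move=> p q; apply/eqP; rewrite -subr_eq0 -sqrf_eq0; apply/eqP.
  have H1 : forall p, \sum_q (S p q - c * Dt p q) ^+ 2 = 0.
    move=> p'; apply: (psumr_eq0P _ HT) => // i _.
    by apply: sumr_ge0 => j _; exact: sqr_ge0.
  by apply: (psumr_eq0P _ (H1 p)) => // j _; exact: sqr_ge0.
transitivity (\sum_z dt (Zt (v z)) (Zt x) * dt (Zt (v z)) (Zt y)).
  by apply: eq_bigr => z _; rewrite !dtZ.
transitivity (\sum_p \sum_q S p q * (Zt x p * Zt y q)).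
  rewrite /S /dt.
  under eq_bigr => z _ do rewrite big_distrlr /=.
  rewrite exchange_big /=; apply: eq_bigr => p _.
  rewrite exchange_big /=; apply: eq_bigr => q _.
  by rewrite mulr_suml; apply: eq_bigr => z _; ring.
rewrite -contractL mulr_sumr; apply: eq_bigr => p _.
rewrite mulr_sumr; apply: eq_bigr => q _; rewrite T0; ring.
Qed.

Definition vv (R : fieldType) (W : 'I_15 -> 'M[R]_16) (z : Yidx) : 'I_16 -> R :=
  fun a => Yvec W z 0 a.

Lemma dotvE (R : fieldType) (W : 'I_15 -> 'M[R]_16) x y :
  dotv (Yvec W x) (Yvec W y) = dt (vv W x) (vv W y).
Proof. by rewrite /dotv mxE; apply: eq_bigr => a _; rewrite mxE. Qed.

Lemma vv_inl (R : fieldType) (W : 'I_15 -> 'M[R]_16) r a :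
  vv W (inl r) a = (r == a)%:R.
Proof. by rewrite /vv /= !mxE. Qed.

Lemma vv_inr (R : fieldType) (W : 'I_15 -> 'M[R]_16) i r a :
  vv W (inr (i, r)) a = 3%:R^-1 * W i r a.
Proof. by rewrite /vv /= !mxE. Qed.

Lemma dtC (R : comPzRingType) (J : finType) (u w : J -> R) : dt u w = dt w u.
Proof. by apply: eq_bigr => j _; rewrite mulrC. Qed.

Lemma dt_ll (R : fieldType) (W : 'I_15 -> 'M[R]_16) r s :
  dt (vv W (inl r)) (vv W (inl s)) = (s == r)%:R.
Proof.
rewrite /dt -(sum_delta r (fun a => (s == a)%:R)) /=.
by apply: eq_bigr => a _; rewrite !vv_inl.
Qed.

Lemma dt_lr (R : fieldType) (W : 'I_15 -> 'M[R]_16) r j s :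
  dt (vv W (inl r)) (vv W (inr (j, s))) = 3%:R^-1 * W j s r.
Proof.
rewrite /dt -(sum_delta r (fun a => 3%:R^-1 * W j s a)) /=.
by apply: eq_bigr => a _; rewrite vv_inl vv_inr.
Qed.

Lemma dt_rr (R : fieldType) (W : 'I_15 -> 'M[R]_16) i r j s :
  dt (vv W (inr (i, r))) (vv W (inr (j, s))) = 3%:R^-1 * (3%:R^-1 * (W i *m (W j)^T) r s).
Proof.
rewrite mxE /dt !mulr_sumr; apply: eq_bigr => a _.
by rewrite !vv_inr mxE; ring.
Qed.

Lemma in3 (R : pzRingType) (x : R) : x \in [:: 1; -1; 0] -> [\/ x = 1, x = -1 | x = 0].
Proof. rewrite !inE; case/or3P => /eqP ->; [exact: Or31 | exact: Or32 | exact: Or33]. Qed.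

Lemma sqrt9 (R : rcfType) : Num.sqrt (9%:R : R) = 3%:R.
Proof.
rewrite (_ : 9%:R = 3%:R ^+ 2 :> R); last by rewrite -natrX.
by rewrite sqrtr_sqr ger0_norm // ler0n.
Qed.

Lemma WtW (R : numFieldType) (M : 'M[R]_16) :
  M *m M^T = (9%:R)%:M -> M^T *m M = (9%:R)%:M.
Proof.
move=> H.
have n9 : (9%:R : R) != 0 by rewrite pnatr_eq0.
have H1 : M *m ((9%:R)^-1 *: M^T) = 1%:M.
  by rewrite -scalemxAr H -scalemx1 scalerA mulVf // scale1r.
have H2 := mulmx1C H1.
rewrite -scalemxAl in H2.
have := congr1 (fun X => 9%:R *: X) H2 => /=.
by rewrite scalerA mulfV // scale1r scalemx1.
Qed.

Lemma norm1 (R : rcfType) (W : 'I_15 -> 'M[R]_16) :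
  mutually_unbiased_weighing 15 16 9 W -> forall z, dt (vv W z) (vv W z) = 1.
Proof.
move=> [HW HU] [r|[i r]]; first by rewrite dt_ll eqxx.
have n3 : (3%:R : R) != 0 by rewrite pnatr_eq0.
by rewrite dt_rr (proj2 (HW i)) mxE eqxx mulr1n; field.
Qed.

Lemma third (R : rcfType) (x : R) : x \in [:: 1; -1; 0] ->
  [\/ 3%:R^-1 * x = 0, 3%:R^-1 * x = 3%:R^-1 | 3%:R^-1 * x = - 3%:R^-1].
Proof.
case/in3 => ->; rewrite ?mulr1 ?mulr0 ?mulrN1; [exact: Or32|exact: Or33|exact: Or31].
Qed.

Lemma dt3 (R : rcfType) (W : 'I_15 -> 'M[R]_16) :
  mutually_unbiased_weighing 15 16 9 W -> forall z w, z != w ->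
  [\/ dt (vv W z) (vv W w) = 0, dt (vv W z) (vv W w) = 3%:R^-1 |
      dt (vv W z) (vv W w) = - 3%:R^-1].
Proof.
move=> [HW HU] [r|[i r]] [s|[j s]] ne.
- rewrite dt_ll; have -> : (s == r) = false by apply/negbTE; rewrite eq_sym; apply: contra ne => /eqP ->.
  exact: Or31.
- by rewrite dt_lr; apply: third; apply: (proj1 (HW j)).
- by rewrite dtC dt_lr; apply: third; apply: (proj1 (HW i)).
- rewrite dt_rr; case: (eqVneq i j) => [eij|nij].
    subst j; rewrite (proj2 (HW i)) mxE.
    have -> : (r == s) = false.
      by apply/negbTE; apply: contra ne => /eqP ->.
    by rewrite mulr0n mulr0 mulr0; exact: Or31.
  have := proj1 (HU i j nij) r s; rewrite mxE sqrt9.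
  exact: third.
Qed.

Lemma dt_ind (R : rcfType) (p : R) :
  [\/ p = 0, p = 3%:R^-1 | p = - 3%:R^-1] ->
  (p == 0)%:R = 1 - 9%:R * p ^+ 2 /\ p ^+ 4 = 9%:R^-1 * p ^+ 2.
Proof.
have n3 : (3%:R : R) != 0 by rewrite pnatr_eq0.
have n9 : (9%:R : R) != 0 by rewrite pnatr_eq0.
have h9 : (9%:R : R) = 3%:R * 3%:R by rewrite -natrM.
case=> ->.
- by rewrite eqxx expr0n /= mulr0 subr0 expr0n /= mulr0.
- rewrite invr_eq0 (negbTE n3) (_ : false%:R = 0 :> R) // h9; split; field; rewrite ?n3 ?pnatr_eq0 //.
- rewrite oppr_eq0 invr_eq0 (negbTE n3) (_ : false%:R = 0 :> R) // h9; split; field; rewrite ?n3 ?pnatr_eq0 //.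
Qed.

Lemma sumsq (R : rcfType) (W : 'I_15 -> 'M[R]_16) :
  mutually_unbiased_weighing 15 16 9 W -> forall u : 'I_16 -> R,
  \sum_w (dt (vv W w) u) ^+ 2 = 16%:R * dt u u.
Proof.
move=> [HW HU] u.
rewrite big_sumType /= sum_pair.
have -> : \sum_r (dt (vv W (inl r)) u) ^+ 2 = dt u u.
  rewrite /dt; apply: eq_bigr => r _.
  rewrite (_ : \sum_j _ = u r) ?expr2 //.
  by rewrite -(sum_delta r u); apply: eq_bigr => b _; rewrite vv_inl.
have Hi : forall i, \sum_r (dt (vv W (inr (i, r))) u) ^+ 2 = dt u u.
  move=> i.
  have WW := WtW (proj2 (HW i)).
  transitivity (\sum_r \sum_a \sum_b 9%:R^-1 * (u a * u b) * (W i r a * W i r b)).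
    apply: eq_bigr => r _; rewrite expr2 /dt big_distrlr /=.
    apply: eq_bigr => a _; apply: eq_bigr => b _; rewrite !vv_inr.
    have -> : (9%:R : R)^-1 = 3%:R^-1 * 3%:R^-1 by rewrite -invfM -natrM.
    ring.
  rewrite exchange_big /=; apply: eq_bigr => a _.
  rewrite exchange_big /=.
  under eq_bigr => b _ do rewrite -mulr_sumr.
  transitivity (\sum_b (a == b)%:R * (u a * u b)).
    apply: eq_bigr => b _.
    have E : ((W i)^T *m W i) a b = ((9%:R)%:M : 'M[R]_16) a b by rewrite WW.
    rewrite !mxE in E.
    have -> : \sum_r W i r a * W i r b = 9%:R * (a == b)%:R.
      rewrite [RHS]mulr_natr -E; apply: eq_bigr => r _; by rewrite ?mxE.
    have n9 : (9%:R : R) != 0 by rewrite pnatr_eq0.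
    by field; rewrite ?n9.
  by rewrite sum_delta.
under eq_bigr => i _ do rewrite Hi.
rewrite sumr_const card_ord -[16%:R]/((1 + 15)%:R) natrD mulrDl mul1r.
by rewrite mulr_natl.
Qed.

Lemma sum_fix (R : comPzRingType) (T : finType) (x : T) (f g : T -> R) :
  (forall y, y != x -> g y = f y) -> \sum_y g y = \sum_y f y - f x + g x.
Proof.
move=> H; rewrite (bigD1 x) // [\sum_y f y](bigD1 x) //=.
have -> : \sum_(y | y != x) g y = \sum_(y | y != x) f y by apply: eq_bigr.
ring.
Qed.

Lemma sum_fix2 (R : comPzRingType) (T : finType) (x y : T) (f g : T -> R) :
  x != y -> (forall z, z != x -> z != y -> g z = f z) ->
  \sum_z g z = \sum_z f z - f x - f y + g x + g y.
Proof.
move=> nxy H.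
pose h z := if z == x then f x else g z.
rewrite (@sum_fix _ _ x h g); last by move=> z /negbTE; rewrite /h => ->.
rewrite (@sum_fix _ _ y f h); last first.
  move=> z nzy; rewrite /h; case: (eqVneq z x) => [->//|nzx]; exact: H.
rewrite /h eqxx eq_sym (negbTE nxy); ring.
Qed.

Lemma cardR (R : numDomainType) (T : finType) (P : pred T) :
  (#|[set y | P y]|)%:R = \sum_y (P y)%:R :> R.
Proof.
rewrite -sum1_card natr_sum big_mkcond /=; apply: eq_bigr => y _.
by rewrite inE; case: (P y).
Qed.

Lemma natr_andb (R : pzRingType) (b1 b2 : bool) : (b1 && b2)%:R = b1%:R * b2%:R :> R.
Proof. by case: b1; case: b2; rewrite /= ?mulr1 ?mulr0. Qed.

Lemma cardY : #|{: Yidx}| = 256%N.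
Proof. by rewrite card_sum card_prod !card_ord. Qed.

Theorem mainTheorem13 (R : rcfType) (W : 'I_15 -> 'M[R]_16) :
  mutually_unbiased_weighing 15 16 9 W ->
  injective (Yvec W) /\ srg (Yorth W) 256 120 56 56.
Proof.
move=> H.
have n1 := norm1 H.
have D3 := dt3 H.
have SQ := sumsq H.
have n3 : (3%:R : R) != 0 by rewrite pnatr_eq0.
have n9 : (9%:R : R) != 0 by rewrite pnatr_eq0.
have inj : injective (Yvec W).
  move=> x y E; apply/eqP; apply/negPn/negP => ne.
  have h1 : dt (vv W x) (vv W y) = 1 by rewrite -dotvE E dotvE n1.
  have lt3 : ((0 : R) < 3%:R^-1) && ((3%:R^-1 : R) < 1).
    apply/andP; split; first by rewrite invr_gt0 ltr0n.
    by rewrite invf_lt1 ?ltr0n // ltr1n.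
  case: (D3 _ _ ne); rewrite h1.
  - by move/eqP; rewrite oner_eq0.
  - by move=> E1; move: lt3; rewrite -E1 ltxx andbF.
  - by move=> E1; move: lt3 => /andP [h _]; move: h; rewrite -oppr_lt0 -E1 ltr10.
have Eo : forall x y, Yorth W x y = (x != y) && (dt (vv W x) (vv W y) == 0).
  by move=> x y; rewrite /Yorth (inj_eq inj) dotvE.
have SA : forall x, \sum_z dt (vv W x) (vv W z) ^+ 2 = 16%:R.
  move=> x; transitivity (\sum_z dt (vv W z) (vv W x) ^+ 2).
    by apply: eq_bigr => z _; rewrite dtC.
  by rewrite SQ n1 mulr1.
have S4 : forall z, \sum_w dt (vv W z) (vv W w) ^+ 4 = 9%:R^-1 * 16%:R - 9%:R^-1 + 1.
  move=> z.
  rewrite (@sum_fix _ _ z (fun w => 9%:R^-1 * dt (vv W z) (vv W w) ^+ 2)); last first.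
    by move=> w nw; rewrite (proj2 (dt_ind (D3 _ _ _))) // eq_sym.
  by rewrite -mulr_sumr SA /= n1 !expr1n mulr1.
have DES := @design R Yidx 16 (vv W) (8%:R / 9%:R).
have DES' : forall x y, \sum_z dt (vv W z) x ^+ 2 * dt (vv W z) y ^+ 2 =
    8%:R / 9%:R * (dt x x * dt y y + 2%:R * dt x y ^+ 2).
  apply: DES.
  under eq_bigr => z _ do rewrite S4.
  under [X in _ - _ * X + _]eq_bigr => z _ do rewrite n1.
  rewrite !sumr_const cardY.
  field.
  by rewrite ?n9.
split => //; split.
- by move=> x; rewrite Eo eqxx.
- by move=> x y; rewrite !Eo eq_sym dtC.
- exact: cardY.
- move=> x; apply/eqP; rewrite -(eqr_nat R) cardR; apply/eqP.
  rewrite (@sum_fix _ _ x (fun y => 1 - 9%:R * dt (vv W x) (vv W y) ^+ 2)); last first.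
    by move=> y ny; rewrite Eo eq_sym ny /= (proj1 (dt_ind (D3 _ _ _))) // eq_sym.
  rewrite /= sumrB -mulr_sumr SA sumr_const cardY Eo eqxx /= n1.
  ring.
- move=> x y nxy; rewrite if_same; apply/eqP; rewrite -(eqr_nat R) cardR; apply/eqP.
  rewrite (@sum_fix2 _ _ x y (fun z => (1 - 9%:R * dt (vv W x) (vv W z) ^+ 2)
       * (1 - 9%:R * dt (vv W y) (vv W z) ^+ 2))) //; last first.
    move=> z nzx nzy; rewrite !Eo natr_andb.
    have hx : x != z by rewrite eq_sym.
    have hy : y != z by rewrite eq_sym.
    rewrite hx hy /=.
    by rewrite (proj1 (dt_ind (D3 x z hx))) (proj1 (dt_ind (D3 y z hy))).
  rewrite !Eo !eqxx /= !n1 (dtC (vv W y) (vv W x)).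
  have -> : \sum_z (1 - 9%:R * dt (vv W x) (vv W z) ^+ 2) *
                   (1 - 9%:R * dt (vv W y) (vv W z) ^+ 2) =
      \sum_(z : Yidx) (1 : R) - 9%:R * \sum_z dt (vv W x) (vv W z) ^+ 2
        - 9%:R * \sum_z dt (vv W y) (vv W z) ^+ 2
        + 81%:R * \sum_z dt (vv W z) (vv W x) ^+ 2 * dt (vv W z) (vv W y) ^+ 2.
    rewrite !mulr_sumr -!sumrB -big_split /=; apply: eq_bigr => z _.
    rewrite (dtC (vv W z) (vv W x)) (dtC (vv W z) (vv W y)); ring.
  rewrite !SA DES' !n1 sumr_const cardY ?(dtC (vv W y) (vv W x)) andbF /=.
  field; by rewrite ?n9.
Qed.
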